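(* Let $\mathcal{H}$ be a complex Hilbert space and $T\in\mathbb{B}(\mathcal{H})$. Then \[ \|T+TT^*T\|=\|T\|+\|T\|^3 . \] Moreover, if $T\neq 0$ and either $\operatorname{dist}(T,\mathbb{K}(\mathcal{H}))<\|T\|$ or $\operatorname{dist}(TT^*T,\mathbb{K}(\mathcal{H}))<\|TT^*T\|$, then there exists a unit vector $x_o\in\mathcal{H}$ such that \[ \frac{T}{\|T\|}x_o=\frac{TT^*T}{\|TT^*T\|}x_o,\qquad \|Tx_o\|=\|T\|,\qquad \|TT^*Tx_o\|=\|TT^*T\|. \]
   Context: $\mathbb{B}(\mathcal{H})$ denotes the $C^*$-algebra of bounded linear operators on $\mathcal{H}$ with the operator norm, $\mathbb{K}(\mathcal{H})$ the ideal of compact operators, and $\operatorname{dist}(S,\mathbb{K}(\mathcal{H}))=\inf\{\|S-K\|:K\in\mathbb{K}(\mathcal{H})\}$. *)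

(* Defs.v *)
From HB Require Import structures.
From mathcomp Require Import all_boot all_order all_algebra.
From mathcomp Require Import complex.
From mathcomp Require Import boolp classical_sets reals.

Set Implicit Arguments.
Unset Strict Implicit.
Unset Printing Implicit Defensive.
Import Order.TTheory GRing.Theory Num.Theory.
Local Open Scope ring_scope.
Local Open Scope classical_set_scope.

Definition rC (R : realType) (r : R) : R[i] := (r%:C)%C.

Section Hilbert.
Variables (R : realType) (V : lmodType R[i]) (ip : V -> V -> R[i]).

Definition hnorm (x : V) : R := Num.sqrt (@complex.Re R (ip x x)).

Definition cauchy_seq (u : nat -> V) : Prop :=
  forall e : R, 0 < e -> exists N : nat, forall m n : nat,
    (N <= m)%N -> (N <= n)%N -> hnorm (u m - u n) < e.

Definition converges_to (u : nat -> V) (l : V) : Prop :=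
  forall e : R, 0 < e -> exists N : nat, forall n : nat,
    (N <= n)%N -> hnorm (u n - l) < e.

Record is_hilbert : Prop := {
  ip_linl : forall (a : R[i]) (x y z : V), ip (a *: x + y) z = a * ip x z + ip y z;
  ip_conj : forall x y : V, ip y x = ((ip x y)^*)%C;
  ip_ge0 : forall x : V, 0 <= ip x x;
  ip_def : forall x : V, ip x x = 0 -> x = 0;
  ip_complete : forall u : nat -> V, cauchy_seq u -> exists l : V, converges_to u l
}.

Definition bounded_op (T : V -> V) : Prop :=
  exists M : R, forall x : V, hnorm (T x) <= M * hnorm x.

Definition opnorm (T : V -> V) : R :=
  sup [set r : R | exists x : V, hnorm x <= 1 /\ r = hnorm (T x)].

Definition compact_op (K : V -> V) : Prop :=
  forall u : nat -> V, (exists M : R, forall n, hnorm (u n) <= M) ->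
    exists phi : nat -> nat, (forall n, (phi n < phi n.+1)%N) /\
      exists l : V, converges_to (fun n => K (u (phi n))) l.

Definition dist_compact (S : V -> V) : R :=
  inf [set r : R | exists K : {linear V -> V},
         bounded_op K /\ compact_op K /\ r = opnorm (fun x => S x - K x)].

End Hilbert.

(* Main.v *)
Require Import Defs.
From HB Require Import structures.
From mathcomp Require Import all_boot all_order all_algebra.
From mathcomp Require Import complex.
From mathcomp Require Import boolp classical_sets reals.
From mathcomp Require Import ring lra.
Import Order.TTheory GRing.Theory Num.Theory.
Set Implicit Arguments.
Unset Strict Implicit.
Local Open Scope ring_scope.
Local Open Scope classical_set_scope.

Definition zf (R : realType) (V : lmodType R[i]) (x : V) : V := 0.
Lemma zf_lin (R : realType) (V : lmodType R[i]) : linear (@zf R V).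
Proof. by move=> a x y; rewrite /zf scaler0 addr0. Qed.
HB.instance Definition _ (R : realType) (V : lmodType R[i]) :=
  GRing.isLinear.Build R[i] V V *:%R (@zf R V) (@zf_lin R V).

Section Reals.
Variable R : realType.
Implicit Types x y c g : R.

Lemma small_pos c g : 0 <= c -> 0 < g -> exists e : R, 0 < e /\ c * e <= g.
Proof.
move=> c0 g0; exists (g / (c + 1)).
have c1 : 0 < c + 1 by lra.
have he : g / (c + 1) * (c + 1) = g by rewrite divfK // gt_eqF.
have e0 : 0 < g / (c + 1) by rewrite divr_gt0.
split => //; nra.
Qed.

Lemma two_small g1 g2 : 0 < g1 -> 0 < g2 -> exists e : R, [/\ 0 < e, e <= g1 & e <= g2].
Proof.
move=> h1 h2; case: (lerP g1 g2) => h.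
- by exists g1; split => //.
- by exists g2; split => //; lra.
Qed.

Lemma le_epsC x y c : 0 <= c -> (forall e, 0 < e -> y <= x + c * e) -> y <= x.
Proof.
move=> c0 H; case: (lerP y x) => // hxy.
have : 0 < (y - x) / 2 by lra.
move=> d0.
have [e' [e'0 ce']] := small_pos c0 d0.
have := H e' e'0; lra.
Qed.

Lemma sq_le x y : 0 <= y -> x ^+ 2 <= y ^+ 2 -> x <= y.
Proof. move=> y0 h; nra. Qed.

Lemma sq_eq x y : 0 <= x -> 0 <= y -> x ^+ 2 = y ^+ 2 -> x = y.
Proof. move=> x0 y0 h; apply/eqP; rewrite eq_le; apply/andP; split; nra. Qed.

Lemma inv_small e : 0 < e -> exists k : nat, forall n : nat, (k <= n)%N -> (n.+1%:R : R)^-1 < e.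
Proof.
move=> e0; have [k hk] := ltr_add_invr e0; exists k => n kn.
rewrite add0r in hk; apply: le_lt_trans hk.
rewrite lef_pV2 ?posrE ?ltr0Sn // ler_nat; by [].
Qed.
Lemma sq_le_lin u c : 0 <= u -> 0 <= c -> u ^+ 2 <= c * u -> u <= c.
Proof.
move=> u0 c0 h; case: (lerP u c) => // hc.
have : 0 < (u - c) * u by rewrite mulr_gt0 //; lra.
nra.
Qed.
Lemma sq_mono (u v : R) : 0 <= u -> u <= v -> u ^+ 2 <= v ^+ 2.
Proof. move=> u0 uv; nra. Qed.

Lemma sq_lt x (e : R) : 0 < e -> x ^+ 2 < e ^+ 2 -> x < e.
Proof. move=> e0 h; case: (lerP e x) => // hx; nra. Qed.
Lemma sq_mono_lt (u v : R) : 0 <= u -> u < v -> u ^+ 2 < v ^+ 2.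
Proof. move=> u0 uv; nra. Qed.
End Reals.

Section IP.
Variables (R : realType) (V : lmodType R[i]) (ip : V -> V -> R[i]).
Hypothesis hH : is_hilbert ip.

Local Notation N := (hnorm ip).
Definition B (x y : V) : R := complex.Re (ip x y).
Definition sc (r : R) (x : V) : V := rC r *: x.

Lemma ip0l z : ip 0 z = 0.
Proof.
have h := ip_linl hH 1 0 0 z; rewrite scaler0 addr0 mul1r in h.
have e : ip 0 z + ip 0 z = ip 0 z + 0 by rewrite addr0 -h.
exact: addrI e.
Qed.

Lemma ipDl x y z : ip (x + y) z = ip x z + ip y z.
Proof. by have := ip_linl hH 1 x y z; rewrite scale1r mul1r. Qed.

Lemma ipZl a x z : ip (a *: x) z = a * ip x z.
Proof. by have := ip_linl hH a x 0 z; rewrite addr0 ip0l addr0. Qed.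

Lemma ReD (u v : R[i]) : complex.Re (u + v) = complex.Re u + complex.Re v.
Proof. by case: u; case: v. Qed.

Lemma ReZ (r : R) (u : R[i]) : complex.Re (rC r * u) = r * complex.Re u.
Proof. by case: u => a b; rewrite /rC /= mul0r subr0. Qed.

Lemma BDl x y z : B (x + y) z = B x z + B y z.
Proof. by rewrite /B ipDl ReD. Qed.

Lemma BZl r x z : B (sc r x) z = r * B x z.
Proof. by rewrite /B /sc ipZl ReZ. Qed.

Lemma BC x y : B x y = B y x.
Proof. by rewrite /B (ip_conj hH x y); case: (ip x y). Qed.

Lemma B0l z : B 0 z = 0.
Proof. by rewrite /B ip0l. Qed.

Lemma BNl x z : B (- x) z = - B x z.
Proof. have := BDl (- x) x z; rewrite addNr B0l; lra. Qed.

Lemma BBl x y z : B (x - y) z = B x z - B y z.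
Proof. by rewrite BDl BNl. Qed.

Lemma BDr x y z : B z (x + y) = B z x + B z y.
Proof. by rewrite BC BDl (BC x) (BC y). Qed.
Lemma BZr r x z : B z (sc r x) = r * B z x.
Proof. by rewrite BC BZl BC. Qed.
Lemma BBr x y z : B z (x - y) = B z x - B z y.
Proof. by rewrite BC BBl (BC x) (BC y). Qed.
Lemma B0r z : B z 0 = 0.
Proof. by rewrite BC B0l. Qed.

Lemma Bge0 x : 0 <= B x x.
Proof. by have := ip_ge0 hH x; rewrite lecE => /andP[_]. Qed.

Lemma Bdef x : B x x = 0 -> x = 0.
Proof.
move=> h; apply: (ip_def hH).
have := ip_ge0 hH x; rewrite lecE /B in h *.
case: (ip x x) h => a b /= -> /andP[/eqP -> _]; by [].
Qed.

Lemma Nsq x : N x ^+ 2 = B x x.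
Proof. by rewrite /hnorm sqr_sqrtr // Bge0. Qed.

Lemma N_ge0 x : 0 <= N x.
Proof. exact: sqrtr_ge0. Qed.

Lemma N0eq x : N x = 0 -> x = 0.
Proof. by move=> h; apply: Bdef; rewrite -Nsq h expr0n. Qed.

Lemma N0 : N 0 = 0.
Proof. by rewrite /hnorm -/(B 0 0) B0l sqrtr0. Qed.

Lemma NDsq x y : N (x + y) ^+ 2 = N x ^+ 2 + 2 * B x y + N y ^+ 2.
Proof. rewrite !Nsq BDl !BDr (BC y x); ring. Qed.

Lemma NBsq x y : N (x - y) ^+ 2 = N x ^+ 2 - 2 * B x y + N y ^+ 2.
Proof. rewrite !Nsq BBl !BBr (BC y x); ring. Qed.

Lemma NZsq r x : N (sc r x) ^+ 2 = r ^+ 2 * N x ^+ 2.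
Proof. rewrite !Nsq BZl BZr; ring. Qed.

Lemma NN x : N (- x) = N x.
Proof.
apply: sq_eq; rewrite ?N_ge0 // !Nsq BNl [B x (- x)]BC BNl opprK -/(B x x) //.
Qed.

Lemma NZ r x : 0 <= r -> N (sc r x) = r * N x.
Proof.
move=> r0; apply: sq_eq; rewrite ?N_ge0 ?mulr_ge0 ?N_ge0 // NZsq; ring.
Qed.

Lemma CS x y : B x y <= N x * N y.
Proof.
have p0 := Bge0 y.
have h := Bge0 (sc (B y y) x - sc (B x y) y).
rewrite !BBl !BBr !BZl !BZr (BC y x) in h.
have hx := Nsq x; have hy := Nsq y.
have nx := N_ge0 x; have ny := N_ge0 y.
case: (ltrP 0 (B y y)) => hp.
  have h2 : B x y ^+ 2 <= (N x * N y) ^+ 2.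
    rewrite exprMn hx hy.
    have : 0 <= B y y * (B y y * B x x - B x y ^+ 2) by nra.
    rewrite pmulr_rge0 //; lra.
  exact: (sq_le (mulr_ge0 nx ny) h2).
have -> : y = 0 by apply: Bdef; lra.
by rewrite B0r N0 mulr0.
Qed.

Lemma CSN x y : - (N x * N y) <= B x y.
Proof. have := CS (- x) y; rewrite BNl NN; lra. Qed.

Lemma ND x y : N (x + y) <= N x + N y.
Proof.
apply: sq_le; first by rewrite addr_ge0 ?N_ge0.
rewrite NDsq; have := CS x y; nra.
Qed.

Lemma NB x y : N (x - y) <= N x + N y.
Proof. by rewrite -(NN y); apply: ND. Qed.

Lemma NBC x y : N (x - y) = N (y - x).
Proof. by rewrite -NN opprB. Qed.

Lemma NrevB x y : N x - N y <= N (x - y).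
Proof. have := ND (x - y) y; rewrite subrK; lra. Qed.

Lemma NrevD x y : N x - N y <= N (x + y).
Proof. have := NrevB x (- y); rewrite opprK NN; lra. Qed.

Definition rlin (F : V -> V) :=
  (forall x y, F (x + y) = F x + F y) /\ (forall r x, F (sc r x) = sc r (F x)).

Lemma lin_rlin (F : {linear V -> V}) : rlin F.
Proof. by split => [x y|r x]; rewrite ?linearD // /sc linearZ. Qed.

Lemma rlin0 F : rlin F -> F 0 = 0.
Proof.
case=> hD _; have := hD 0 0; rewrite addr0 => e.
have e2 : F 0 + F 0 = F 0 + 0 by rewrite addr0 -e.
exact: addrI e2.
Qed.

Lemma rlinN F x : rlin F -> F (- x) = - F x.
Proof.
move=> hF; have := (proj1 hF) (- x) x; rewrite addNr rlin0 // => e.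
by apply/eqP; rewrite -subr_eq0 opprK eq_sym -e.
Qed.

Lemma rlinB F x y : rlin F -> F (x - y) = F x - F y.
Proof. by move=> hF; rewrite (proj1 hF) rlinN. Qed.

Lemma rlin_comp F G : rlin F -> rlin G -> rlin (fun x => F (G x)).
Proof.
move=> [fD fZ] [gD gZ]; split => [x y|r x]; first by rewrite gD fD.
by rewrite gZ fZ.
Qed.

Lemma scD r u v : sc r (u + v) = sc r u + sc r v.
Proof. by rewrite /sc scalerDr. Qed.

Lemma scB r u v : sc r (u - v) = sc r u - sc r v.
Proof. by rewrite /sc scalerBr. Qed.

Lemma rlin_add F G : rlin F -> rlin G -> rlin (fun x => F x + G x).
Proof.
move=> [fD fZ] [gD gZ]; split => [x y|r x]; first by rewrite fD gD addrACA.
by rewrite fZ gZ scD.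
Qed.

Lemma rlin_sub F G : rlin F -> rlin G -> rlin (fun x => F x - G x).
Proof.
move=> hF hG; have [fD fZ] := hF; have [gD gZ] := hG.
split => [x y|r x]; first by rewrite fD gD opprD addrACA.
by rewrite fZ gZ scB.
Qed.

Definition bnd (F : V -> V) := bounded_op ip F.

Lemma bnd_pos F : bnd F -> exists M, 0 <= M /\ forall x, N (F x) <= M * N x.
Proof.
case=> M hM; case: (lerP 0 M) => hM0; first by exists M.
exists 0; split => // x; have := hM x; have := N_ge0 x; have := N_ge0 (F x); nra.
Qed.

Lemma bnd_add F G : bnd F -> bnd G -> bnd (fun x => F x + G x).
Proof.
move=> /bnd_pos[M [M0 hM]] /bnd_pos[L [L0 hL]]; exists (M + L) => x.
apply: le_trans (ND _ _) _; have := hM x; have := hL x; lra.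
Qed.

Lemma bnd_sub F G : bnd F -> bnd G -> bnd (fun x => F x - G x).
Proof.
move=> /bnd_pos[M [M0 hM]] /bnd_pos[L [L0 hL]]; exists (M + L) => x.
apply: le_trans (NB _ _) _; have := hM x; have := hL x; lra.
Qed.

Lemma bnd_comp F G : bnd F -> bnd G -> bnd (fun x => F (G x)).
Proof.
move=> /bnd_pos[M [M0 hM]] /bnd_pos[L [L0 hL]]; exists (M * L) => x.
apply: le_trans (hM _) _; have := hL x; have := N_ge0 x; nra.
Qed.

Definition Eop (F : V -> V) := [set r : R | exists x : V, N x <= 1 /\ r = N (F x)].

Lemma op_hs F : bnd F -> has_sup (Eop F).
Proof.
move=> /bnd_pos[M [M0 hM]]; split; first by exists (N (F 0)), 0; rewrite N0.
exists M => r [x [hx ->]]; have := hM x; have := N_ge0 x; nra.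
Qed.

Lemma op_ub F x : bnd F -> N x <= 1 -> N (F x) <= opnorm ip F.
Proof. by move=> hF hx; apply: sup_upper_bound (op_hs hF) _ _; exists x. Qed.

Lemma op_ge0 F : bnd F -> 0 <= opnorm ip F.
Proof.
move=> hF; apply: le_trans (N_ge0 (F 0)) _; apply: op_ub => //; rewrite N0.
by [].
Qed.

Lemma op_le F c : (forall x, N x <= 1 -> N (F x) <= c) -> opnorm ip F <= c.
Proof.
move=> h; apply: ge_sup; first by exists (N (F 0)), 0; rewrite N0.
by move=> r [x [hx ->]]; apply: h.
Qed.

Lemma op_approx F e : bnd F -> 0 < e -> exists x, N x <= 1 /\ opnorm ip F - e < N (F x).
Proof.
move=> hF e0; have [r [x [hx ->]] hr] := sup_adherent e0 (op_hs hF).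
by exists x.
Qed.

Lemma op_bound F x : bnd F -> rlin F -> N (F x) <= opnorm ip F * N x.
Proof.
move=> hF hl; have nx := N_ge0 x; case: (lerP (N x) 0) => hx.
  have -> : x = 0 by apply: N0eq; lra.
  by rewrite rlin0 // N0 mulr0.
set y := sc (N x)^-1 x.
have i0 : 0 <= (N x)^-1 by rewrite invr_ge0.
have ny : N y = 1 by rewrite /y NZ // mulVf // gt_eqF.
have ny1 : N y <= 1 by rewrite ny.
have := op_ub hF ny1; rewrite /y (proj2 hl) NZ //.
by rewrite -(ler_pM2r hx) mulrAC mulVf ?gt_eqF // mul1r.
Qed.

Lemma op_le2 F c : 0 <= c -> (forall x, N (F x) <= c * N x) -> opnorm ip F <= c.
Proof.
move=> c0 h; apply: op_le => x hx; apply: le_trans (h x) _.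
by rewrite ler_piMr.
Qed.

Section Op.
Variables (T Tadj : {linear V -> V}).
Hypothesis hT : bounded_op ip T.
Hypothesis hadj : forall x y, ip (T x) y = ip x (Tadj y).

Local Notation nT := (opnorm ip T).
Let A x := Tadj (T x).
Local Notation a := (nT ^+ 2).

Lemma Badj x y : B (T x) y = B x (Tadj y).
Proof. by rewrite /B hadj. Qed.

Lemma T_bound x : N (T x) <= nT * N x.
Proof. exact: op_bound hT (lin_rlin T). Qed.

Lemma nT_ge0 : 0 <= nT.
Proof. exact: op_ge0 hT. Qed.

Lemma adj_bound y : N (Tadj y) <= nT * N y.
Proof.
have h : N (Tadj y) ^+ 2 = B (T (Tadj y)) y by rewrite Badj Nsq.
have h1 := CS (T (Tadj y)) y.
have h2 := T_bound (Tadj y).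
have u0 := N_ge0 (Tadj y); have y0 := N_ge0 y; have n0 := nT_ge0.
have h3 : N (Tadj y) ^+ 2 <= (nT * N y) * N (Tadj y) by nra.
exact: sq_le_lin u0 (mulr_ge0 n0 y0) h3.
Qed.

Lemma bnd_adj : bnd Tadj.
Proof. by exists nT; apply: adj_bound. Qed.

Lemma BA x : B (A x) x = N (T x) ^+ 2.
Proof. by rewrite /A BC -Badj Nsq. Qed.

Lemma A_bound x : N (A x) <= nT * N (T x).
Proof. exact: adj_bound. Qed.

Lemma eig_ineq x : N (A x - sc a x) ^+ 2 <= a * (a * N x ^+ 2 - N (T x) ^+ 2).
Proof.
rewrite NBsq BZr BA NZsq.
have h := A_bound x; have u0 := N_ge0 (A x); have n0 := nT_ge0.
have v0 := N_ge0 (T x).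
have : N (A x) ^+ 2 <= a * N (T x) ^+ 2 by nra.
lra.
Qed.

Lemma eig_approx x e : N x <= 1 -> 0 < e -> nT - e < N (T x) ->
  N (A x - sc a x) ^+ 2 <= 2 * nT ^+ 3 * e.
Proof.
move=> hx e0 hu; have h := eig_ineq x.
have u0 := N_ge0 (T x); have x0 := N_ge0 x; have n0 := nT_ge0.
have hb := T_bound x.
have ub : N (T x) <= nT by nra.
have hx2 : N x ^+ 2 <= 1 by nra.
have h1 : a * N x ^+ 2 <= a by apply: ler_piMr => //; exact: sqr_ge0.
have h2a : (nT - N (T x)) * (nT + N (T x)) <= e * (nT + N (T x)).
  by apply: ler_wpM2r; lra.
have h2 : a - N (T x) ^+ 2 <= 2 * nT * e by nra.
have h3 : 0 <= a by nra.
have : a * (a * N x ^+ 2 - N (T x) ^+ 2) <= a * (2 * nT * e) by nra.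
lra.
Qed.

Lemma TA_decomp x : T (A x - sc a x) = T (A x) - sc a (T x).
Proof. by rewrite rlinB; [rewrite /sc linearZ | exact: lin_rlin]. Qed.

Lemma lowerG (al : R) G : 0 <= al -> bnd G ->
  (forall x, G x = sc al (T x) + T (A x - sc a x)) -> al * nT <= opnorm ip G.
Proof.
move=> al0 hG hGx; apply: (@le_epsC _ _ _ 1) => // e e0.
have n0 := nT_ge0.
have e2 : 0 < e / 2 by lra.
have e4 : 0 < e ^+ 2 / 4 by rewrite divr_gt0 // exprn_gt0.
have [h1 [h10 h1a]] := small_pos al0 e2.
have [h2 [h20 h2a]] := small_pos (c:= 2 * nT ^+ 5) (mulr_ge0 (ler0n _ 2) (exprn_ge0 5 n0)) e4.
have [eta [et0 et1 et2]] := two_small h10 h20.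
have [x [hx hu]] := op_approx hT et0.
set r := A x - sc a x.
have hr := eig_approx hx et0 hu.
have g1 := op_ub hG hx.
have g2 : N (sc al (T x)) - N (T r) <= N (G x) by rewrite hGx; apply: NrevD.
rewrite NZ // in g2.
have g3 := T_bound r.
have r0 := N_ge0 r.
have p5 : 0 <= 2 * nT ^+ 5 by rewrite mulr_ge0 // exprn_ge0.
have a1 : nT ^+ 2 * N r ^+ 2 <= nT ^+ 2 * (2 * nT ^+ 3 * eta).
  by apply: ler_wpM2l => //; exact: sqr_ge0.
have a2 : nT ^+ 2 * (2 * nT ^+ 3 * eta) = 2 * nT ^+ 5 * eta by ring.
have a3 : 2 * nT ^+ 5 * eta <= 2 * nT ^+ 5 * h2 by apply: ler_wpM2l.
have g4 : (nT * N r) ^+ 2 <= (e / 2) ^+ 2.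
  have -> : (e / 2) ^+ 2 = e ^+ 2 / 4 by field.
  rewrite exprMn; lra.
have g5 : nT * N r <= e / 2 by apply: sq_le => //; lra.
have g6 : al * eta <= al * h1 by apply: ler_wpM2l.
have g7 : al * (nT - eta) <= al * N (T x) by apply: ler_wpM2l => //; lra.
have g8 : N (T r) <= nT * N r by exact: g3.
lra.
Qed.

Lemma bnd_S : bnd (fun x => T (Tadj (T x))).
Proof. exact: bnd_comp hT (bnd_comp bnd_adj hT). Qed.

Lemma S_bound x : N (T (Tadj (T x))) <= nT ^+ 3 * N x.
Proof.
have h1 := T_bound (Tadj (T x)); have h2 := adj_bound (T x).
have h3 := T_bound x; have n0 := nT_ge0.
have : nT * N (Tadj (T x)) <= nT * (nT * N (T x)) by apply: ler_wpM2l.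
have : nT * (nT * N (T x)) <= nT * (nT * (nT * N x)).
  by apply: ler_wpM2l => //; apply: ler_wpM2l.
have -> : nT ^+ 3 * N x = nT * (nT * (nT * N x)) by ring.
lra.
Qed.

Lemma scD1 r v : sc (1 + r) v = v + sc r v.
Proof. by rewrite /sc /rC rmorphD rmorph1 scalerDl scale1r. Qed.

Lemma opS : opnorm ip (fun x => T (Tadj (T x))) = nT ^+ 3.
Proof.
have n0 := nT_ge0.
apply: le_anti; apply/andP; split.
  by apply: op_le2; [exact: exprn_ge0 | exact: S_bound].
have -> : nT ^+ 3 = a * nT by ring.
apply: lowerG; [exact: sqr_ge0 | exact: bnd_S|] => x.
by rewrite TA_decomp addrC subrK.
Qed.

Lemma opTS : opnorm ip (fun x => T x + T (Tadj (T x))) = nT + nT ^+ 3.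
Proof.
have n0 := nT_ge0.
apply: le_anti; apply/andP; split.
  apply: op_le2; first by rewrite addr_ge0 // exprn_ge0.
  move=> x; apply: le_trans (ND _ _) _.
  have := T_bound x; have := S_bound x; lra.
have -> : nT + nT ^+ 3 = (1 + a) * nT by ring.
apply: lowerG; [by rewrite addr_ge0 // sqr_ge0 | exact: bnd_add hT bnd_S|] => x.
by rewrite TA_decomp scD1 addrACA subrr addr0.
Qed.
End Op.

Section Core.
Variables (T Tadj : {linear V -> V}).
Hypothesis hT : bounded_op ip T.
Hypothesis hadj : forall x y, ip (T x) y = ip x (Tadj y).

Local Notation nT := (opnorm ip T).
Local Notation a := (nT ^+ 2).
Let A x := Tadj (T x).
Let Fr x := A x - sc a x.

Lemma rlin_sc r : rlin (sc r).
Proof.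
split => [x y|s x]; first exact: scD.
by rewrite /sc !scalerA mulrC.
Qed.

Lemma rlin_Fr : rlin Fr.
Proof.
apply: rlin_sub (rlin_sc a).
exact: rlin_comp (lin_rlin Tadj) (lin_rlin T).
Qed.

Lemma phi_ge (phi : nat -> nat) : (forall n, phi n < phi n.+1)%N -> forall n, (n <= phi n)%N.
Proof.
move=> h; elim=> [|n IH] //; exact: leq_ltn_trans IH (h n).
Qed.

Lemma inv_mono (m n : nat) : (n <= m)%N -> (m.+1%:R : R)^-1 <= (n.+1%:R)^-1.
Proof. by move=> h; rewrite lef_pV2 ?posrE ?ltr0Sn // ler_nat. Qed.

Lemma lowT w : a * N w ^+ 2 <= N (T w) ^+ 2 + N w * N (Fr w).
Proof.
have h : N (T w) ^+ 2 = B (Fr w) w + a * N w ^+ 2.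
  rewrite -(BA hadj) /Fr BBl BZl Nsq; ring.
have h2 := CSN (Fr w) w; rewrite (mulrC (N (Fr w))) in h2; lra.
Qed.

Lemma core G (K : {linear V -> V}) p L :
  rlin G -> bnd G -> bnd K -> compact_op ip K -> 0 <= L -> 0 < nT ->
  opnorm ip (fun x => G x - K x) ^+ 2 < p ->
  (forall w, N w <= 2 -> p * N w ^+ 2 <= (N (G w) + L * N (Fr w)) ^+ 2 + L * N (Fr w)) ->
  exists xo, N xo <= 1 /\ nT <= N (T xo).
Proof.
move=> lG bG bK cK L0 nT0 hcp hlow.
set c := opnorm ip (fun x => G x - K x).
have bGK : bnd (fun x => G x - K x) := bnd_sub bG bK.
have lGK : rlin (fun x => G x - K x) := rlin_sub lG (lin_rlin K).
have c0 : 0 <= c := op_ge0 bGK.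
have n0 : 0 <= nT := nT_ge0 hT.
have : forall n : nat, exists x, N x <= 1 /\ nT - (n.+1%:R : R)^-1 < N (T x).
  move=> n; apply: op_approx hT _; by rewrite invr_gt0 ltr0Sn.
case/choice => xs hxs.
have [phi [hphi [y hy]]] := cK xs (ex_intro (fun M : R => forall n, N (xs n) <= M) 1 (fun n => proj1 (hxs n))).
set z := fun n => xs (phi n).
have hz : forall n, N (z n) <= 1 /\ nT - (n.+1%:R : R)^-1 < N (T (z n)).
  move=> n; rewrite /z; have [h1 h2] := hxs (phi n); split => //.
  apply: le_lt_trans h2; rewrite lerD2l lerN2; exact: inv_mono (phi_ge hphi n).
have rz : forall d, 0 < d -> exists M : nat, forall m, (M <= m)%N -> N (Fr (z m)) <= d.
  move=> d d0.
  have d2 : 0 < d ^+ 2 by rewrite exprn_gt0.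
  have [eps [eps0 heps]] := small_pos (c := 2 * nT ^+ 3) (mulr_ge0 (ler0n _ 2) (exprn_ge0 3 n0)) d2.
  have [k hk] := inv_small eps0.
  exists k => m km.
  have [h1 h2] := hz m.
  have i0 : 0 < (m.+1%:R : R)^-1 by rewrite invr_gt0 ltr0Sn.
  have h3 : N (Fr (z m)) ^+ 2 <= 2 * nT ^+ 3 * (m.+1%:R)^-1 := eig_approx hT hadj h1 i0 h2.
  have h4 := hk m km.
  apply: sq_le; first exact: ltW.
  have : 2 * nT ^+ 3 * (m.+1%:R)^-1 <= 2 * nT ^+ 3 * eps.
    by apply: ler_wpM2l; [exact: mulr_ge0 (ler0n _ 2) (exprn_ge0 3 n0) | exact: ltW].
  move=> h5; exact: le_trans h3 (le_trans h5 heps).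
have hcau : cauchy_seq ip z.
  move=> e e0.
  set D := p - c ^+ 2.
  have D0 : 0 < D by rewrite /D subr_gt0.
  set L2 := 2 + 2 * L.
  have L20 : 0 < L2 by rewrite /L2; lra.
  have c4 : 0 <= (4 * c + 2) * L2 by rewrite mulr_ge0 //; lra.
  have De : 0 < D * e ^+ 2 / 2 by rewrite divr_gt0 // mulr_gt0 // exprn_gt0.
  have [d1 [d10 hd1]] := small_pos c4 De.
  have [d2 [d20 hd2]] := small_pos (ltW L20) ltr01.
  have [d [d0 dd1 dd2]] := two_small d10 d20.
  have [M1 hM1] := hy d d0.
  have [M2 hM2] := rz d d0.
  exists (maxn M1 M2) => m n hm hn.
  have hm1 : (M1 <= m)%N := leq_trans (leq_maxl _ _) hm.
  have hm2 : (M2 <= m)%N := leq_trans (leq_maxr _ _) hm.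
  have hn1 : (M1 <= n)%N := leq_trans (leq_maxl _ _) hn.
  have hn2 : (M2 <= n)%N := leq_trans (leq_maxr _ _) hn.
  set w := z m - z n.
  have hw2 : N w <= 2.
    have := NB (z m) (z n); have := proj1 (hz m); have := proj1 (hz n); rewrite -/w; lra.
  have hFr : N (Fr w) <= 2 * d.
    have -> : Fr w = Fr (z m) - Fr (z n) by exact: rlinB rlin_Fr.
    have := NB (Fr (z m)) (Fr (z n)); have := hM2 m hm2; have := hM2 n hn2; lra.
  have hKw : N (K w) <= 2 * d.
    have -> : K w = (K (z m) - y) - (K (z n) - y) by rewrite /w linearB opprB addrA subrK.
    have e1 : N (K (z m) - y) < d := hM1 m hm1.
    have e2 : N (K (z n) - y) < d := hM1 n hn1.
    have := NB (K (z m) - y) (K (z n) - y); lra.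
  have hGw : N (G w) <= c * N w + N (K w).
    have h : N (G w - K w) <= c * N w := op_bound w bGK lGK.
    have := ND (G w - K w) (K w); rewrite subrK; lra.
  set k := N (K w) + L * N (Fr w).
  have fr0 := N_ge0 (Fr w); have kw0 := N_ge0 (K w); have w0 := N_ge0 w.
  have lf : L * N (Fr w) <= L * (2 * d) by apply: ler_wpM2l.
  have lf0 : 0 <= L * N (Fr w) by apply: mulr_ge0.
  have k1 : k <= L2 * d by rewrite /k /L2; lra.
  have k0 : 0 <= k by rewrite /k; lra.
  have kd : L2 * d <= 1.
    have : L2 * d <= L2 * d2 by apply: ler_wpM2l => //; exact: ltW.
    lra.
  have hl := hlow w hw2.
  have hk2 : (N (G w) + L * N (Fr w)) ^+ 2 <= (c * N w + k) ^+ 2.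
    apply: sq_mono; first by rewrite addr_ge0 ?N_ge0.
    rewrite /k; lra.
  have t1 : c * N w * k <= c * 2 * k.
    by apply: ler_wpM2r => //; apply: ler_wpM2l.
  have t2 : k * k <= k * 1 by apply: ler_wpM2l => //; lra.
  have t3 : D * N w ^+ 2 <= (4 * c + 2) * k.
    have e1 : (c * N w + k) ^+ 2 = c ^+ 2 * N w ^+ 2 + 2 * (c * N w * k) + k * k by ring.
    have e2 : L * N (Fr w) <= k by rewrite /k; lra.
    rewrite e1 in hk2; rewrite /D mulrBl; clearbody k; lra.
  have t4 : (4 * c + 2) * k <= (4 * c + 2) * (L2 * d).
    by apply: ler_wpM2l => //; lra.
  have t5 : (4 * c + 2) * L2 * d <= (4 * c + 2) * L2 * d1 by apply: ler_wpM2l.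
  have t6 : D * N w ^+ 2 < D * e ^+ 2.
    have : D * e ^+ 2 / 2 < D * e ^+ 2 by rewrite ltr_pdivrMr //; nra.
    rewrite mulrA in t4; lra.
  rewrite ltr_pM2l // in t6.
  exact: sq_lt e0 t6.
have [xo hxo] := ip_complete hH hcau.
exists xo; split.
  apply: (@le_epsC _ _ _ 1) => // e e0.
  have [M hM] := hxo e e0.
  have h1 := hM M (leqnn M).
  have h2 := proj1 (hz M).
  have := NB (z M) (z M - xo); rewrite opprB addrC subrK; lra.
apply: (@le_epsC _ _ _ (1 + nT)); first lra.
move=> e e0.
have [M hM] := hxo e e0.
have [k hk] := inv_small e0.
have h1 := hM (maxn M k) (leq_maxl _ _).
have h2 := hk (maxn M k) (leq_maxr _ _).
have [_ h3] := hz (maxn M k).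
have h4 := T_bound hT (z (maxn M k) - xo).
have h5 := ND (T xo) (T (z (maxn M k) - xo)).
rewrite -linearD addrC subrK in h5.
have : nT * N (z (maxn M k) - xo) <= nT * e by apply: ler_wpM2l => //; exact: ltW.
move: h2 h3; generalize ((maxn M k).+1%:R : R)^-1 => q h2 h3.
lra.
Qed.

Lemma nT_pos : ~ (forall x, T x = 0) -> 0 < nT.
Proof.
move=> hnz; case: (lerP nT 0) => // h; exfalso; apply: hnz => x.
apply: N0eq; have := T_bound hT x; have := N_ge0 (T x); have := N_ge0 x; nra.
Qed.

Lemma finish xo : 0 < nT -> N xo <= 1 -> nT <= N (T xo) ->
  [/\ N xo = 1, N (T xo) = nT & Tadj (T xo) = sc a xo].
Proof.
move=> n0 h1 h2; have h3 := T_bound hT xo; have x0 := N_ge0 xo.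
have ex : N xo = 1 by nra.
have et : N (T xo) = nT by nra.
split => //.
have h4 := eig_ineq hT hadj xo; rewrite ex et expr1n mulr1 subrr mulr0 in h4.
have : N (Tadj (T xo) - sc a xo) = 0.
  by apply/eqP; rewrite -sqrf_eq0 eq_le h4 sqr_ge0.
by move/N0eq/eqP; rewrite subr_eq0 => /eqP.
Qed.

Lemma caseT (K : {linear V -> V}) : bnd K -> compact_op ip K -> 0 < nT ->
  opnorm ip (fun x => T x - K x) < nT -> exists xo, N xo <= 1 /\ nT <= N (T xo).
Proof.
move=> bK cK n0 hc.
have c0 : 0 <= opnorm ip (fun x => T x - K x) := op_ge0 (bnd_sub hT bK).
apply: (@core T K a 2) => //.
- exact: lin_rlin.
- nra.
move=> w hw; have h := lowT w; have f0 := N_ge0 (Fr w).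
have t0 := N_ge0 (T w).
have : N w * N (Fr w) <= 2 * N (Fr w) by apply: ler_wpM2r.
nra.
Qed.

Lemma caseS (K : {linear V -> V}) : bnd K -> compact_op ip K -> 0 < nT ->
  opnorm ip (fun x => T (Tadj (T x)) - K x) < nT ^+ 3 ->
  exists xo, N xo <= 1 /\ nT <= N (T xo).
Proof.
move=> bK cK n0 hc.
have c0 : 0 <= opnorm ip (fun x => T (Tadj (T x)) - K x) :=
  op_ge0 (bnd_sub (bnd_S hT hadj) bK).
have a0 : 0 <= a by exact: sqr_ge0.
apply: (@core (fun x => T (Tadj (T x))) K ((nT ^+ 3) ^+ 2) (nT + 2 * a ^+ 2)) => //.
- exact: rlin_comp (lin_rlin T) (rlin_comp (lin_rlin Tadj) (lin_rlin T)).
- exact: bnd_S hT hadj.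
- by apply: addr_ge0; [exact: ltW | apply: mulr_ge0 => //; exact: exprn_ge0].
- apply: sq_mono_lt => //.
move=> w hw; have h := lowT w; have f0 := N_ge0 (Fr w).
have t0 := N_ge0 (T w); have s0 := N_ge0 (T (Tadj (T w))).
have eS : T (Tadj (T w)) = sc a (T w) + T (Fr w).
  by rewrite /Fr /A TA_decomp addrC subrK.
have g1 : a * N (T w) - nT * N (Fr w) <= N (T (Tadj (T w))).
  rewrite eS; have := NrevD (sc a (T w)) (T (Fr w)); rewrite NZ //.
  have := T_bound hT (Fr w); lra.
have g2 : (a * N (T w)) ^+ 2 <= (N (T (Tadj (T w))) + nT * N (Fr w)) ^+ 2.
  by apply: sq_mono; [exact: mulr_ge0 | lra].
have g3 : a * N w ^+ 2 <= N (T w) ^+ 2 + 2 * N (Fr w).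
  have : N w * N (Fr w) <= 2 * N (Fr w) by apply: ler_wpM2r.
  lra.
have g4 : a ^+ 2 * (a * N w ^+ 2) <= a ^+ 2 * (N (T w) ^+ 2 + 2 * N (Fr w)).
  by apply: ler_wpM2l => //; exact: sqr_ge0.
have g5 : (N (T (Tadj (T w))) + nT * N (Fr w)) ^+ 2 <=
          (N (T (Tadj (T w))) + (nT + 2 * a ^+ 2) * N (Fr w)) ^+ 2.
  apply: sq_mono; first by apply: addr_ge0 => //; apply: mulr_ge0 => //; exact: ltW.
  have : 0 <= 2 * a ^+ 2 * N (Fr w).
    by apply: mulr_ge0 => //; apply: mulr_ge0 => //; exact: exprn_ge0.
  rewrite mulrDl; lra.
have e1 : (nT ^+ 3) ^+ 2 * N w ^+ 2 = a ^+ 2 * (a * N w ^+ 2) by ring.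
have e2 : (a * N (T w)) ^+ 2 = a ^+ 2 * N (T w) ^+ 2 by ring.
rewrite e1; rewrite e2 in g2.
have : 2 * a ^+ 2 * N (Fr w) <= (nT + 2 * a ^+ 2) * N (Fr w).
  by apply: ler_wpM2r => //; lra.
lra.
Qed.
End Core.

Lemma dist_lt G : dist_compact ip G < opnorm ip G ->
  exists K : {linear V -> V}, [/\ bnd K, compact_op ip K &
     opnorm ip (fun x => G x - K x) < opnorm ip G].
Proof.
move=> hd.
have ne : [set r : R | exists K : {linear V -> V}, bounded_op ip K /\ compact_op ip K /\
    r = opnorm ip (fun x => G x - K x)] !=set0.
  exists (opnorm ip (fun x => G x - @zf R V x)), (@zf R V : {linear V -> V}).
  split; first by exists 0 => x; rewrite /zf N0 mul0r.
  split => //.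
  move=> u _; exists (fun n => n); split => //.
  exists 0 => e e0; exists 0%N => n _; by rewrite /zf subrr N0.
have [r [K [bK [cK ->]]] hr] := inf_lt ne hd.
by exists K.
Qed.
End IP.

Theorem corollary2p9 (R : realType) (V : lmodType R[i]) (ip : V -> V -> R[i])
  (hH : is_hilbert ip) (T Tadj : {linear V -> V})
  (hT : bounded_op ip T)
  (hadj : forall x y : V, ip (T x) y = ip x (Tadj y)) :
  let S := fun x : V => T (Tadj (T x)) in
  opnorm ip (fun x => T x + S x) = opnorm ip T + opnorm ip T ^+ 3 /\
  (~ (forall x : V, T x = 0) ->
   (dist_compact ip T < opnorm ip T \/ dist_compact ip S < opnorm ip S) ->
   exists xo : V, hnorm ip xo = 1 /\
     rC (opnorm ip T)^-1 *: T xo = rC (opnorm ip S)^-1 *: S xo /\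
     hnorm ip (T xo) = opnorm ip T /\
     hnorm ip (S xo) = opnorm ip S).
Proof.
move=> S; rewrite /S.
split; first exact (opTS hH hT hadj).
move=> hnz hd.
have n0 := nT_pos hH hT hnz.
have [xo [h1 h2]] : exists xo, hnorm ip xo <= 1 /\ opnorm ip T <= hnorm ip (T xo).
  case: hd => hd.
    have [K [bK cK hK]] := dist_lt hH hd.
    exact (caseT hH hT hadj bK cK n0 hK).
  have [K [bK cK hK]] := dist_lt hH hd.
  rewrite (opS hH hT hadj) in hK.
  exact (caseS hH hT hadj bK cK n0 hK).
have [e1 e2 e3] := finish hH hT hadj n0 h1 h2.
rewrite (opS hH hT hadj).
have eS : T (Tadj (T xo)) = sc (opnorm ip T ^+ 2) (T xo).
  by rewrite e3 /sc linearZ.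
exists xo; split => //; split; last split => //.
  rewrite eS /sc scalerA -rmorphM.
  congr (rC _ *: _); field; exact: lt0r_neq0.
rewrite eS (NZ hH) ?e2; first by rewrite -exprSr.
exact (exprn_ge0 2 (ltW n0)).
Qed.
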